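(* Let $A\subseteq\mathbb{F}_2^n\setminus\{0\}$ have size $q$, and let $a=\lceil\log(q+1)\rceil$. Then $A$ contains at least \[ \prod_{j=0}^{a-1}(q+1-2^j) \] ordered linearly independent $a$-tuples (i.e., tuples $(v_1,\dots,v_a)\in A^a$ with $v_1,\dots,v_a$ linearly independent over $\mathbb{F}_2$).
   Context: $\log$ denotes the base-$2$ logarithm. *)

(* Defs.v *)
From mathcomp Require Import all_boot all_order all_algebra.
Set Implicit Arguments. Unset Strict Implicit. Unset Printing Implicit Defensive.
Import GRing.Theory Num.Theory.

Definition indep_tuples (n a : nat) (A : {set 'rV['F_2]_n}) :
    {set {ffun 'I_a -> 'rV['F_2]_n}} :=
  [set f : {ffun 'I_a -> 'rV['F_2]_n} |
     [forall i, f i \in A] && row_free (\matrix_(i < a) f i)].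

(* Main.v *)
Require Import Defs.
From mathcomp Require Import all_boot all_order all_algebra zify.
Import GRing.Theory Num.Theory.

Set Implicit Arguments. Unset Strict Implicit.
Local Open Scope ring_scope.
Section S.
Variable n : nat.
Local Notation V := 'rV['F_2]_n.

Definition ext k (f : {ffun 'I_k -> V}) (v : V) : {ffun 'I_k.+1 -> V} :=
  [ffun i : 'I_(1 + k) => match split i with inl _ => v | inr j => f j end].

Arguments ext {k}.

Lemma ext_mx k (f : {ffun 'I_k -> V}) v :
  \matrix_(i < k.+1) ext f v i = col_mx v (\matrix_(i < k) f i).
Proof.
apply/matrixP => i j; rewrite !mxE ffunE.
case: (split (i : 'I_(1 + k))) => a; rewrite ?mxE //. by rewrite [a]ord1.
Qed.

Lemma ext_l k (f : {ffun 'I_k -> V}) v : ext f v (lshift k (ord0 : 'I_1)) = v.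
Proof.
rewrite ffunE.
have -> : split (lshift k (ord0 : 'I_1)) = inl ord0 := unsplitK (inl (ord0 : 'I_1)).
by [].
Qed.

Lemma ext_r k (f : {ffun 'I_k -> V}) v j : ext f v (rshift 1 j) = f j.
Proof.
rewrite ffunE.
have -> : split (rshift 1 j) = inr j := unsplitK (inr j : 'I_1 + 'I_k).
by [].
Qed.

Lemma ext_inj k : injective (fun p : {ffun 'I_k -> V} * V => ext p.1 p.2).
Proof.
move=> [f v] [g w] /= E.
have Ev : v = w by rewrite -(ext_l f v) -(ext_l g w) E.
rewrite Ev; congr (_, _); apply/ffunP => j.
by rewrite -(ext_r f v) -(ext_r g w) E.
Qed.

Lemma span_card k (M : 'M['F_2]_(k, n)) (A : {set V}) :
  (0 : V) \notin A -> (#|[set v in A | (v <= M)%MS]| <= 2 ^ k - 1)%N.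
Proof.
move=> A0.
set S := [set v in A | _].
have sub : S \subset (fun u : 'rV['F_2]_k => u *m M) @: [set: 'rV_k] :\ 0.
  apply/subsetP => v; rewrite inE => /andP[vA /submxP [u Hu]]; rewrite Hu in vA *.
  rewrite !inE; apply/andP; split.
    by apply: contraNneq A0 => <-.
  by apply: imset_f; rewrite inE.
apply: leq_trans (subset_leq_card sub) _.
have h0 : (0 : V) \in (fun u : 'rV['F_2]_k => u *m M) @: [set: 'rV_k].
  by apply/imsetP; exists 0; rewrite ?inE ?mul0mx.
have := cardsD1 0 ((fun u : 'rV['F_2]_k => u *m M) @: [set: 'rV_k]).
rewrite h0 add1n => E.
have : (#|(fun u : 'rV['F_2]_k => u *m M) @: [set: 'rV_k]| <= 2 ^ k)%N.
  apply: leq_trans (leq_imset_card _ _) _.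
  by rewrite cardsT card_mx card_Fp // mul1n.
rewrite E => h; rewrite leq_subRL ?expn_gt0 // add1n //.
Qed.
Lemma rowfree_col k (M : 'M['F_2]_(k,n)) (v : V) :
  row_free M -> ~~ (v <= M)%MS -> row_free (col_mx v M).
Proof.
move=> /eqP rM vM.
rewrite /row_free eqn_leq rank_leq_row /=.
rewrite -(addsmxE v M).
have : (M < v + M)%MS.
  rewrite ltmxE addsmxSr /=; apply: contra vM => h.
  exact: submx_trans (addsmxSl v M) h.
by rewrite ltmxErank rM => /andP[_].
Qed.

Lemma count_step k (A : {set V}) q : (0 : V) \notin A -> #|A| = q ->
  (#|indep_tuples k A| * (q.+1 - 2 ^ k) <= #|indep_tuples k.+1 A|)%N.
Proof.
move=> A0 cA.
set T := indep_tuples k A.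
pose E (f : {ffun 'I_k -> V}) := A :\: [set v | (v <= \matrix_(i < k) f i)%MS].
pose P := [set p : {ffun 'I_k -> V} * V | (p.1 \in T) && (p.2 \in E p.1)].
have cP : #|P| = (\sum_(f in T) #|E f|)%N.
  rewrite -sum1_card.
  rewrite (eq_bigl (fun p => (p.1 \in T) && (p.2 \in E p.1))); last first.
    by move=> p; rewrite inE.
  rewrite -(pair_big_dep (fun f => f \in T) (fun f v => v \in E f) (fun _ _ => 1%N)).
  by apply: eq_bigr => f _; rewrite sum1_card.
have cE : forall f, (q.+1 - 2 ^ k <= #|E f|)%N.
  move=> f.
  have h := span_card (\matrix_(i < k) f i) A0.
  have h2 := cardsID [set v | (v <= \matrix_(i < k) f i)%MS] A.
  have e : [set v in A | (v <= \matrix_(i < k) f i)%MS] = A :&: [set v | (v <= \matrix_(i < k) f i)%MS].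
    by apply/setP => v; rewrite !inE.
  rewrite e in h.
  rewrite /E; move: h h2; rewrite cA.
  have : (0 < 2 ^ k)%N by rewrite expn_gt0.
  set a := #|A :&: _|; set b := #|A :\: _|; set t := (2 ^ k)%N; lia.
have L1 : (#|T| * (q.+1 - 2 ^ k) <= #|P|)%N.
  rewrite cP -sum_nat_const; exact: leq_sum.
apply: leq_trans L1 _.
rewrite -(card_in_imset (f := fun p : {ffun 'I_k -> V} * V => ext p.1 p.2)); last first.
  by move=> x y _ _; apply: ext_inj.
apply: subset_leq_card; apply/subsetP => _ /imsetP [[f v] pP ->] /=.
move: pP; rewrite !inE /= => /and3P [/andP [/forallP fA fr] vS vA].
apply/andP; split.
  apply/forallP => i; rewrite ffunE; by case: (split _).
rewrite ext_mx; exact: rowfree_col.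
Qed.

End S.

Lemma count_all n (A : {set 'rV['F_2]_n}) q k : (0 : 'rV['F_2]_n) \notin A -> #|A| = q ->
  (\prod_(0 <= j < k) (q.+1 - 2 ^ j) <= #|indep_tuples k A|)%N.
Proof.
move=> A0 cA; elim: k => [|k IH].
  rewrite big_mkord big_ord0; apply/card_gt0P; exists [ffun i : 'I_0 => 0].
  rewrite inE; apply/andP; split; first by apply/forallP => -[].
  by rewrite /row_free -leqn0 rank_leq_row.
rewrite big_nat_recr //=.
apply: leq_trans (count_step k A0 cA).
by rewrite leq_mul2r IH orbT.
Qed.

Theorem lemma2p1 (n q : nat) (A : {set 'rV['F_2]_n}) :
  (0 : 'rV['F_2]_n)%R \notin A -> #|A| = q ->
  ((\prod_(0 <= j < up_log 2 q.+1) ((q.+1)%:Z - (2 ^ j)%:Z)) <=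
     (#|indep_tuples (up_log 2 q.+1) A|)%:Z)%R.
Proof.
move=> A0 cA.
have E : (\prod_(0 <= j < up_log 2 q.+1) ((q.+1)%:Z - (2 ^ j)%:Z)) = ((\prod_(0 <= j < up_log 2 q.+1) (q.+1 - 2 ^ j))%N)%:Z.
  rewrite -[RHS]intz prodMz; apply: eq_big_nat => j /andP [_ ja].
  rewrite intz subzn //.
  case: q cA ja => [|q'] cA ja.
    by move: ja; rewrite up_log1.
  have h := up_log_gtn (p := 2) (n := q'.+2) isT isT.
  apply: leq_trans (ltnW h); rewrite leq_exp2l //.
  by rewrite -ltnS prednK // (leq_ltn_trans _ ja).
rewrite E lez_nat; exact: count_all.
Qed.
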